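(* Let $A\in\mathbb{R}^{n\times n}$ be Hurwitz (all eigenvalues with strictly negative real parts), let $C\in\mathbb{R}^{r\times n}$ be such that $(A,C)$ is observable, and let $P$ be the unique symmetric positive definite solution of $A^TP+PA+C^TC=0$. Let $Q\in\mathbb{R}^{n\times m}$ satisfy $Q^TQ=I_{m\times m}$. Then for every initial state $y(0)\in\mathbb{R}^n$, the solution $y(t)$ of $\dot y=Ay$ satisfies, for all $t\ge 0$, $$Q^Ty(t)\in\mathcal{E}\big(0,\ Q^TP^{-1}Q,\ \|y(0)\|_P\big).$$
   Context: $\|y\|_P=\sqrt{y^TPy}$. For $c\in\mathbb{R}^m$, a symmetric positive semidefinite $\Sigma\in\mathbb{R}^{m\times m}$ and $\rho\ge 0$, $\mathcal{E}(c,\Sigma,\rho)=\{c+\Sigma^{1/2}u: u\in\mathbb{R}^m,\ \|u\|\le\rho\}$ with $\Sigma^{1/2}$ the symmetric positive semidefinite square root. *)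

(* Defs.v *)
From mathcomp Require Import all_boot all_algebra.
From mathcomp Require Import all_classical all_reals all_analysis.
From mathcomp Require Import complex.
Import GRing.Theory Num.Theory numFieldNormedType.Exports.
Local Open Scope ring_scope.

Set Implicit Arguments.
Unset Strict Implicit.
Unset Printing Implicit Defensive.

Definition cplx_mx (R : realType) (m n : nat) (A : 'M[R]_(m, n)) : 'M[R[i]]_(m, n) :=
  map_mx (fun x : R => Complex x 0) A.

Definition hurwitz (R : realType) (n : nat) (A : 'M[R]_n) : Prop :=
  forall lam : R[i], eigenvalue (cplx_mx A) lam -> complex.Re lam < 0.

Definition obs_mx (R : realType) (n r : nat) (A : 'M[R]_n) (C : 'M[R]_(r, n)) :=
  \mxcol_(k < n) (C *m A ^+ k).

Definition observable (R : realType) (n r : nat) (A : 'M[R]_n) (C : 'M[R]_(r, n)) : Prop :=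
  \rank (obs_mx A C) = n.

Definition symmetric_mx (R : realType) (n : nat) (S : 'M[R]_n) : Prop := S^T = S.

Definition pos_def (R : realType) (n : nat) (S : 'M[R]_n) : Prop :=
  symmetric_mx S /\ forall x : 'cV[R]_n, x != 0 -> 0 < (x^T *m S *m x) 0 0.

Definition pos_semidef (R : realType) (n : nat) (S : 'M[R]_n) : Prop :=
  symmetric_mx S /\ forall x : 'cV[R]_n, 0 <= (x^T *m S *m x) 0 0.

Definition enorm (R : realType) (n : nat) (u : 'cV[R]_n) : R := Num.sqrt ((u^T *m u) 0 0).
Definition Pnorm (R : realType) (n : nat) (P : 'M[R]_n) (y : 'cV[R]_n) : R :=
  Num.sqrt ((y^T *m P *m y) 0 0).

Definition is_psd_sqrt (R : realType) (m : nat) (S Sigma : 'M[R]_m) : Prop :=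
  pos_semidef S /\ S *m S = Sigma.

Definition in_ellipsoid (R : realType) (m : nat) (c : 'cV[R]_m) (Sigma : 'M[R]_m) (rho : R)
  (z : 'cV[R]_m) : Prop :=
  exists S : 'M[R]_m, is_psd_sqrt S Sigma /\
    exists u : 'cV[R]_m, enorm u <= rho /\ z = c + S *m u.

(* Main.v *)
Require Import Defs.
From mathcomp Require Import all_boot all_algebra.
From mathcomp Require Import all_classical all_reals all_analysis.
From mathcomp Require Import complex.
From mathcomp Require Import ring lra.
Import GRing.Theory Num.Theory numFieldNormedType.Exports.
Local Open Scope ring_scope.
Lemma interp_exists (F : fieldType) (s : seq F) (f : F -> F) :
  exists p : {poly F}, forall x, x \in s -> p.[x] = f x.
Proof.
elim: s => [|a s [p Hp]]; first by exists 0.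
have [ains|anotin] := boolP (a \in s).
  by exists p => x; rewrite inE => /orP[/eqP->|]; [exact: Hp|exact: Hp].
pose w := \prod_(y <- s) ('X - y%:P).
have w0 : w.[a] != 0.
  rewrite /w horner_prod prodf_seq_neq0; apply/allP => y ys /=.
  by rewrite hornerXsubC subr_eq0; apply: contra anotin => /eqP->.
exists (p + ((f a - p.[a]) / w.[a]) *: w) => x; rewrite inE hornerD hornerZ.
case/orP => [/eqP->|xs]; first by rewrite divfK // addrC subrK.
have -> : w.[x] = 0.
  by rewrite /w horner_prod (big_rem x) //= hornerXsubC subrr mul0r.
by rewrite mulr0 addr0 Hp.
Qed.

Lemma Re_mulJ (R : realType) (z w : R[i]) :
  complex.Re (z * w^*%C) = complex.Re z * complex.Re w + complex.Im z * complex.Im w.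
Proof. case: z => a b; case: w => c d /=. ring. Qed.

Lemma Re_Cmul (R : realType) (x : R) (z : R[i]) :
  complex.Re (x%:C%C * z) = x * complex.Re z.
Proof. case: z => a b /=. ring. Qed.
Local Open Scope sesquilinear_scope.
Lemma Re_qform (R : realType) k (M : 'M[R]_k) (v : 'rV[R[i]]_k) :
  complex.Re ((v *m cplx_mx M *m v ^t*) 0 0) =
  (map_mx (@complex.Re R) v *m M *m (map_mx (@complex.Re R) v)^T) 0 0 +
  (map_mx (@complex.Im R) v *m M *m (map_mx (@complex.Im R) v)^T) 0 0.
Proof.
rewrite !mxE raddf_sum -big_split /=; apply: eq_bigr => j _.
rewrite !mxE !big_distrl raddf_sum -big_split /=; apply: eq_bigr => l _.
rewrite !mxE.
have -> : v 0 l * (M l j +i* 0)%C * (v 0 j)^* = (M l j)%:C%C * (v 0 l * (v 0 j)^*%C).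
  by rewrite mulrAC mulrC.
rewrite Re_Cmul Re_mulJ; ring.
Qed.
Local Close Scope sesquilinear_scope.

Lemma trmx_horner (R : comNzRingType) k (M : 'M[R]_k.+1) (p : {poly R}) :
  (horner_mx M p)^T = horner_mx M^T p.
Proof.
elim/poly_ind: p => [|p c IH]; first by rewrite !rmorph0 trmx0.
rewrite !rmorphD !rmorphM /= !horner_mx_X !horner_mx_C raddfD /=.
rewrite -!mulmxE trmx_mul IH tr_scalar_mx; congr (_ + _).
exact: comm_mx_horner.
Qed.

Lemma qf_ge0 (R : realType) k (u : 'cV[R]_k) : 0 <= (u^T *m u) 0 0.
Proof. rewrite mxE; apply: sumr_ge0 => i _; rewrite mxE; by rewrite -expr2 sqr_ge0. Qed.

Lemma cplx_mx_map (R : realType) m n (M : 'M[R]_(m,n)) :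
  cplx_mx M = map_mx (real_complex R) M.
Proof. by []. Qed.
Local Open Scope sesquilinear_scope.
Lemma psd_sqrt (R : realType) k (M : 'M[R]_k) :
  pos_semidef M -> exists S, is_psd_sqrt S M.
Proof.
case: k M => [|k] M [Msym Mpsd].
  exists 0; split; last by apply/matrixP => -[].
  split; [by apply/matrixP => -[] | by move=> x; rewrite mulmx0 mul0mx mxE].
set Ac := cplx_mx M.
have AcH : Ac ^t* = Ac.
  apply/matrixP => i j; rewrite !mxE (_ : M j i = M i j); last by rewrite -{1}Msym mxE.
  exact: conjc_real.
have Anorm : Ac \is normalmx by apply/normalmxP; rewrite AcH.
have Aherm : Ac \is hermsymmx.
  by rewrite qualifE /= expr0 scale1r AcH.
have Adec := orthomx_spectralP Anorm.
set U := spectralmx Ac in Adec; set d := spectral_diag Ac in Adec.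
have Uu : U \in unitmx := spectral_unit Ac.
have dreal := hermitian_spectral_diag_real Aherm.
have UAc : U *m Ac = diag_mx d *m U.
  by rewrite {1}Adec !mulmxA mulmxV // mul1mx.
have dE i : d 0 i = (row i U *m Ac *m (row i U) ^t*) 0 0.
  have -> : row i U *m Ac = d 0 i *: row i U.
    rewrite -row_mul UAc row_mul row_diag_mx -scalemxAl. by rewrite -rowE.
  rewrite -scalemxAl mxE -dotmxE.
  have /row_unitarymxP /(_ i i) -> := spectral_unitarymx Ac.
  by rewrite eqxx mulr1.
have dge0 i : 0 <= complex.Re (d 0 i).
  rewrite dE Re_qform; apply: addr_ge0.
    by have := Mpsd (map_mx (@complex.Re R) (row i U))^T; rewrite trmxK.
  by have := Mpsd (map_mx (@complex.Im R) (row i U))^T; rewrite trmxK.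
have dRe i : d 0 i = (complex.Re (d 0 i))%:C%C.
  by rewrite RRe_real //; move/mxOverP: dreal; apply.
have [q Hq] := @interp_exists _ [seq complex.Re (d 0 i) | i <- enum 'I_k.+1]
  (fun x => Num.sqrt (Num.sqrt x)).
set B := horner_mx M q.
have HB4 : horner_mx M (q ^+ 4 - 'X) = 0.
  apply: (@map_mx_inj _ _ (real_complex R)); rewrite map_mx0 map_horner_mx.
  rewrite -cplx_mx_map -/Ac Adec.
  rewrite (_ : invmx U *m diag_mx d *m U = invmx U *m diag_mx d *m invmx (invmx U)); last by rewrite invmxK.
  rewrite horner_mx_uconj; last first.
    by rewrite unitmx_inv.
  rewrite invmxK horner_mx_diag.
  have -> : map_mx (horner (map_poly (real_complex R) (q ^+ 4 - 'X))) d = 0.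
    apply/matrixP => i j; rewrite !mxE ord1 dRe horner_map /= hornerD hornerN.
    rewrite hornerX horner_exp Hq; last by apply: map_f; rewrite mem_enum.
    by rewrite (_ : 4 = 2 * 2)%N // exprM !sqr_sqrtr ?sqrtr_ge0 ?dge0 // subrr.
  by rewrite linear0 mulmx0 mul0mx.
have B4 : B ^+ 4 = M.
  by move/eqP: HB4; rewrite rmorphB rmorphXn /= horner_mx_X subr_eq0 => /eqP.
have BT : B^T = B by rewrite trmx_horner Msym.
exists (B *m B); split; last by rewrite -B4 !mulmxE !exprS expr0 mulr1 !mulrA.
split; first by rewrite /symmetric_mx trmx_mul BT.
move=> x; have -> : x^T *m (B *m B) *m x = (B *m x)^T *m (B *m x).
  by rewrite trmx_mul BT !mulmxA.
exact: qf_ge0.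
Qed.

Local Close Scope sesquilinear_scope.
Lemma key_ineq (R : realType) n m (P : 'M[R]_n) (Q : 'M[R]_(n,m)) (y : 'cV[R]_n) :
  P \in unitmx -> P^T = P -> (forall x : 'cV[R]_n, 0 <= (x^T *m invmx P *m x) 0 0) ->
  (Q^T *m invmx P *m Q) \in unitmx ->
  ((Q^T *m y)^T *m invmx (Q^T *m invmx P *m Q) *m (Q^T *m y)) 0 0
    <= (y^T *m P *m y) 0 0.
Proof.
move=> Pu PT Pipsd Sgu.
set Pi := invmx P; set Sg := Q^T *m Pi *m Q; set Si := invmx Sg.
set w := Q^T *m y; set v := Si *m w.
have PiT : Pi^T = Pi by rewrite /Pi trmx_inv PT.
have SgT : Sg^T = Sg by rewrite /Sg !trmx_mul trmxK PiT mulmxA.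
have SiT : Si^T = Si by rewrite /Si trmx_inv SgT.
have Sgv : Sg *m v = w by rewrite /v /Si mulKVmx.
have vT : v^T = w^T *m Si by rewrite /v trmx_mul SiT.
have wT : w^T = y^T *m Q by rewrite /w trmx_mul trmxK.
have E : (P *m y - Q *m v)^T *m Pi *m (P *m y - Q *m v)
         = y^T *m P *m y - w^T *m Si *m w.
  rewrite [(_ - _)^T]linearB /= [(P *m y)^T]trmx_mul [(Q *m v)^T]trmx_mul PT mulmxBl mulmxBl mulmxBr mulmxBr.
  have T1 : y^T *m P *m Pi *m (P *m y) = y^T *m P *m y.
    by rewrite -!mulmxA (mulmxA Pi) mulVmx // mul1mx.
  have T2 : y^T *m P *m Pi *m (Q *m v) = w^T *m Si *m w.
    by rewrite -(mulmxA _ P) mulmxV // mulmx1 wT mulmxA /v !mulmxA.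
  have T3 : v^T *m Q^T *m Pi *m (P *m y) = w^T *m Si *m w.
    by rewrite -!mulmxA (mulmxA Pi) mulVmx // mul1mx vT -!mulmxA.
  have T4 : v^T *m Q^T *m Pi *m (Q *m v) = w^T *m Si *m w.
    by rewrite mulmxA -!(mulmxA v^T) -/Sg Sgv vT.
  rewrite T1 T2 T3 T4.
  by rewrite opprB addrA subrK.
have := Pipsd (P *m y - Q *m v); rewrite E mxE.
move=> H; rewrite -subr_ge0; move: H; congr (0 <= _ + _); rewrite mxE //.
Qed.
Lemma pd_unit (R : realType) k (M : 'M[R]_k) : pos_def M -> M \in unitmx.
Proof.
move=> [Msym Mpd]; rewrite unitmxE unitfE; apply/negP => /det0P [v v0 vM].
have := Mpd v^T; rewrite trmxK vM mul0mx mxE order.Order.POrderTheory.ltxx => H.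
suff : v^T != 0 by move/H.
apply: contra v0 => /eqP/(congr1 trmx); rewrite trmxK trmx0 => ->; by [].
Qed.
Local Open Scope classical_set_scope.

Lemma is_derive_mul3 (R : realType) (f g : R -> R) (c t df dg : R) :
  is_derive t 1 f df -> is_derive t 1 g dg ->
  is_derive t 1 (fun s => f s * c * g s) (df * c * g t + f t * c * dg).
Proof.
move=> hf hg.
have -> : (fun s => f s * c * g s) = (c *: f) * g.
  apply/funext => s /=; rewrite !fctE /=; change (c *: f s) with (c * f s); ring.
apply: is_derive_eq.
rewrite !fctE /=; change (c * f t * dg + g t * (c * df) = df * c * g t + f t * c * dg); ring.
Qed.

Lemma is_derive_entry (R : realType) p q (y : R -> 'M[R]_(p,q)) (t : R) dy i j :
  is_derive t 1 y dy -> is_derive t 1 (fun s => y s i j) (dy i j).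
Proof.
move=> hy.
have dery : derivable y t 1 by case: hy.
have derij : derivable (fun s => y s i j) t 1 by move/derivable_mxP: dery; apply.
apply: (is_derive_eq (derivableP derij)).
by rewrite -(@derive_val _ _ _ _ _ _ _ hy) derive_mx // mxE.
Qed.

Lemma qexp (R : realType) n (a b : 'cV[R]_n) (M : 'M[R]_n) :
  (a^T *m M *m b) 0 0 = \sum_(k < n) \sum_(j < n) a j 0 * M j k * b k 0.
Proof.
rewrite mxE; apply: eq_bigr => k _; rewrite mxE big_distrl /=.
by apply: eq_bigr => j _; rewrite mxE.
Qed.

Lemma is_derive_qf (R : realType) n (M : 'M[R]_n) (y : R -> 'cV[R]_n) (t : R) dy :
  is_derive t 1 y dy ->
  is_derive t 1 (fun s => ((y s)^T *m M *m y s) 0 0)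
    ((dy^T *m M *m y t) 0 0 + ((y t)^T *m M *m dy) 0 0).
Proof.
move=> hy.
have -> : (fun s => ((y s)^T *m M *m y s) 0 0) =
   \sum_(k < n) \sum_(j < n) (fun s => y s j 0 * M j k * y s k 0).
  apply/funext => s; rewrite qexp !fct_sumE; apply: eq_bigr => k _.
  by rewrite !fct_sumE.
apply: is_derive_eq.
  apply: is_derive_sum => k; apply: is_derive_sum => j.
  apply: is_derive_mul3; exact: is_derive_entry.
by rewrite !qexp -big_split /=; apply: eq_bigr => k _; rewrite -big_split.
Qed.

Lemma energy_decr (R : realType) n r (A P : 'M[R]_n) (C : 'M[R]_(r,n))
  (y : R -> 'cV[R]_n) :
  A^T *m P + P *m A + C^T *m C = 0 ->
  {within [set t : R | 0 <= t], continuous y} ->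
  (forall t : R, 0 < t -> is_derive t 1 y (A *m y t)) ->
  forall t : R, 0 <= t -> ((y t)^T *m P *m y t) 0 0 <= ((y 0)^T *m P *m y 0) 0 0.
Proof.
move=> Lyap ycont yder t t0.
pose f (s : R) : R := ((y s)^T *m P *m y s) 0 0.
have fder (s : R) : 0 < s -> is_derive s 1 f
    (((A *m y s)^T *m P *m y s) 0 0 + ((y s)^T *m P *m (A *m y s)) 0 0).
  by move=> s0; apply: is_derive_qf; exact: yder.
apply: (@ler0_derive1_nincry _ f 0) => //.
- move=> x; rewrite in_itv /= andbT => x0.
  by have [] := fder x x0.
- move=> x; rewrite in_itv /= andbT => x0.
  rewrite derive1E (@derive_val _ _ _ _ _ _ _ (fder x x0)).
  set z := y x.
  have E : A^T *m P + P *m A = - (C^T *m C).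
    by apply/eqP; rewrite -addr_eq0 Lyap.
  have M : (A *m z)^T *m P *m z + z^T *m P *m (A *m z) = - ((C *m z)^T *m (C *m z)).
    rewrite trmx_mul -!mulmxA -mulmxDr !mulmxA -mulmxDl E.
    by rewrite mulNmx mulmxN trmx_mul !mulmxA.
  have -> : ((A *m z)^T *m P *m z) 0 0 + (z^T *m P *m (A *m z)) 0 0
     = (- ((C *m z)^T *m (C *m z))) 0 0.
    by rewrite -M [in RHS]mxE.
  by rewrite mxE oppr_le0 qf_ge0.
- rewrite set_itvcy.
  have hent j : {within [set t : R | 0 <= t], continuous (fun s => y s j 0)}.
    move=> x; exact: (continuous_comp (ycont x) (@coord_continuous _ _ _ j 0 _)).
  have -> : f = \sum_(k < n) \sum_(j < n) (fun s => y s j 0 * P j k * y s k 0).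
    apply/funext => s; rewrite /f qexp !fct_sumE; apply: eq_bigr => k _.
    by rewrite !fct_sumE.
  move=> x; elim/big_ind: _ => [|g h cg ch|k _].
  + exact: cst_continuous.
  + exact: continuousD.
  elim/big_ind: _ => [|g h cg ch|j _].
  + exact: cst_continuous.
  + exact: continuousD.
  apply: cvgM; last exact: hent.
  apply: cvgM; first exact: hent.
  exact: cvg_cst.
Qed.

Theorem proposition13 (R : realType) (n r m : nat)
  (A : 'M[R]_n) (C : 'M[R]_(r, n)) (P : 'M[R]_n) (Q : 'M[R]_(n, m))
  (y : R -> 'cV[R]_n) :
  hurwitz A ->
  observable A C ->
  pos_def P ->
  A^T *m P + P *m A + C^T *m C = 0 ->
  Q^T *m Q = 1%:M ->
  {within [set t : R | 0 <= t], continuous y} ->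
  (forall t : R, 0 < t -> is_derive t 1 y (A *m y t)) ->
  forall t : R, 0 <= t ->
    in_ellipsoid 0 (Q^T *m invmx P *m Q) (Pnorm P (y 0)) (Q^T *m y t).
Proof.
move=> _ _ Ppd Lyap QQ ycont yder t t0.
have Pu : P \in unitmx by apply: pd_unit.
case: Ppd => Psym Ppd.
set Pi := invmx P.
have PiT : Pi^T = Pi by rewrite /Pi trmx_inv Psym.
have PiE (x : 'cV[R]_n) : x^T *m Pi *m x = (Pi *m x)^T *m P *m (Pi *m x).
  by rewrite trmx_mul PiT -!mulmxA (mulmxA P) mulmxV // mul1mx.
have Pipsd (x : 'cV[R]_n) : 0 <= (x^T *m Pi *m x) 0 0.
  rewrite PiE; have [->|nz] := eqVneq (Pi *m x) 0.
    by rewrite mulmx0 mxE.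
  exact: order.Order.POrderTheory.ltW (Ppd _ nz).
set Sg := Q^T *m Pi *m Q.
have SgT : Sg^T = Sg by rewrite /Sg !trmx_mul trmxK PiT mulmxA.
have Sgpd : pos_def Sg.
  split => // z z0.
  have -> : z^T *m Sg *m z = (Q *m z)^T *m Pi *m (Q *m z).
    by rewrite /Sg trmx_mul !mulmxA.
  rewrite PiE; apply: Ppd.
  apply: contra z0 => /eqP H.
  have : Q^T *m (P *m (Pi *m (Q *m z))) = z.
    by rewrite (mulmxA P) mulmxV // mul1mx mulmxA QQ mul1mx.
  by rewrite H !mulmx0 => <-.
have Sgu : Sg \in unitmx by apply: pd_unit.
have [S [[Ssym Spsd] SS]] : exists S, is_psd_sqrt S Sg.
  by apply: psd_sqrt; case: Sgpd => Ssym Spd; split => // x; have [->|/Spd/order.Order.POrderTheory.ltW] := eqVneq x 0; rewrite ?mulmx0 ?mxE.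
have Su : S \in unitmx.
  by move: Sgu; rewrite -SS unitmx_mul => /andP[].
exists S; split; first by split.
exists (invmx S *m (Q^T *m y t)); split; last by rewrite add0r mulKVmx.
rewrite /enorm /Pnorm; apply: ler_wsqrtr.
have SiSi : invmx S *m invmx S = invmx Sg.
  rewrite -[LHS]mul1mx -(mulVmx Sgu) -SS -!mulmxA (mulmxA S (invmx S)).
  by rewrite mulmxV // mul1mx mulmxV // mulmx1.
have -> : (invmx S *m (Q^T *m y t))^T *m (invmx S *m (Q^T *m y t))
    = (Q^T *m y t)^T *m invmx Sg *m (Q^T *m y t).
  by rewrite trmx_mul trmx_inv Ssym -SiSi !mulmxA.
apply: order.Order.POrderTheory.le_trans (@key_ineq R n m P Q (y t) Pu Psym Pipsd Sgu) _.
exact: energy_decr Lyap ycont yder t t0.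
Qed.
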